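(* Let $\phi\in\,]0,\pi[$, $M\in\mathbb{R}$, $N>0$. Let $\Sigma$ be the Keplerian branch around ${\rm O}$ in the plane ${\rm O}xy$ with equation $r=My+N$. Consider the affine map $(x_1,y_1)\mapsto(x_3,y_3)$ defined by $x_1=x_3-M\frac{\cos\phi}{\sin\phi}y_3-N\cos\phi$, $y_1=\frac{1}{\sin\phi}y_3$. Then the image of $\Sigma$ by this map is the Keplerian branch around ${\rm O}$ with equation $r=x\cos\phi+yM\sin\phi+N\sin^2\phi$.
   Context: In the Euclidean plane ${\rm O}xy$, $r=\sqrt{x^2+y^2}$. A Keplerian branch around ${\rm O}$ is the image of a solution of Newton's system $\ddot q=-q/\|q\|^3$ (extended through collisions by bouncing back along the same ray with the same energy). For $\gamma>0$, the set of points satisfying $r=\alpha x+\beta y+\gamma$ is an (irreducible) Keplerian branch around ${\rm O}$, and every nonrectilinear Keplerian branch is of this form. *)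

(* Defs.v *)
From Stdlib Require Import Reals.
Open Scope R_scope.

Definition rad (p : R * R) : R := sqrt (fst p ^ 2 + snd p ^ 2).

Definition kepler_curve (a b c : R) (p : R * R) : Prop :=
  rad p = a * fst p + b * snd p + c.

Definition lemma6_map_rel (phi M N : R) (p1 p3 : R * R) : Prop :=
  fst p1 = fst p3 - M * (cos phi / sin phi) * snd p3 - N * cos phi /\
  snd p1 = snd p3 / sin phi.

(* Main.v *)
Require Import Defs.
From Stdlib Require Import Reals Lra Psatz.
Open Scope R_scope.

Lemma sqrt_eq_iff (a b : R) : 0 <= a -> (sqrt a = b <-> 0 <= b /\ a = b * b).
Proof.
  intro Ha; split.
  - intro H; subst b; split; [apply sqrt_pos | rewrite sqrt_sqrt; lra].
  - intros [Hb H]; rewrite H; apply sqrt_square; exact Hb.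
Qed.

Lemma key (c s x1 y1 M N : R) : 0 < s -> c*c + s*s = 1 ->
  (sqrt (x1 ^ 2 + y1 ^ 2) = 0 * x1 + M * y1 + N <->
   sqrt ((x1 + M*c*y1 + N*c) ^ 2 + (s*y1) ^ 2) =
     c * (x1 + M*c*y1 + N*c) + M * s * (s*y1) + N * s ^ 2).
Proof.
  intros Hs Hcs.
  rewrite (sqrt_eq_iff (x1 ^ 2 + y1 ^ 2)) by (apply Rplus_le_le_0_compat; apply pow2_ge_0).
  rewrite (sqrt_eq_iff ((x1 + M*c*y1 + N*c) ^ 2 + (s*y1) ^ 2)) by (apply Rplus_le_le_0_compat; apply pow2_ge_0).
  set (L := M*y1 + N).
  assert (HT : c * (x1 + M*c*y1 + N*c) + M * s * (s*y1) + N * s ^ 2 = c*x1 + L).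
  { unfold L. replace (s^2) with (1 - c*c) by (simpl; lra).
    replace (M * s * (s*y1)) with (M*y1*(s*s)) by ring.
    replace (s*s) with (1 - c*c) by lra. ring. }
  rewrite HT. replace (0 * x1 + M * y1 + N) with L by (unfold L; ring).
  assert (Hc : c*c < 1) by nra.
  split.
  - intros [HL Heq]. split.
    + assert ((c*x1)*(c*x1) <= L*L) by nra. nra.
    + replace ((s*y1)^2) with ((s*s)*(y1*y1)) by ring.
      replace (s*s) with (1 - c*c) by lra.
      replace (y1*y1) with (L*L - x1*x1) by (simpl in Heq; nra). unfold L; ring.
  - intros [HT0 Heq].
    assert (E : x1^2 + y1^2 = L*L).
    { assert (H2 : (s*s) * (x1^2 + y1^2 - L*L) = 0).
      { replace ((s*s) * (x1^2 + y1^2 - L*L)) with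
          (((x1 + M*c*y1 + N*c) ^ 2 + (s*y1) ^ 2 - (c*x1 + L)*(c*x1 + L))
           + (c*c + s*s - 1)*(x1*x1 - L*L)) by (unfold L; ring).
        rewrite Heq, Hcs. ring. }
      apply Rmult_integral in H2. destruct H2; nra. }
    split; [|exact E].
    destruct (Rle_or_lt 0 L) as [|HL]; [assumption|].
    exfalso.
    assert (Hx : x1*x1 <= L*L) by (pose proof (pow2_ge_0 y1); simpl in E; nra).
    assert (H1 : (c*c)*(x1*x1) <= (c*c)*(L*L)) by (apply Rmult_le_compat_l; nra).
    assert (HLL : 0 < L*L) by nra.
    assert (H3' : 0 < (1 - c*c)*(L*L)) by (apply Rmult_lt_0_compat; lra).
    assert (H3 : (c*c)*(L*L) < L*L) by lra.
    assert ((c*x1)*(c*x1) < L*L) by nra. nra.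
Qed.

Theorem lemma6 (phi M N : R) (hphi0 : 0 < phi) (hphi1 : phi < PI) (hN : 0 < N) :
  forall p3 : R * R,
    (exists p1 : R * R, kepler_curve 0 M N p1 /\ lemma6_map_rel phi M N p1 p3)
    <-> kepler_curve (cos phi) (M * sin phi) (N * (sin phi) ^ 2) p3.
Proof.
  intros [x y].
  assert (Hs : 0 < sin phi) by (apply sin_gt_0; lra).
  assert (Hcs : cos phi * cos phi + sin phi * sin phi = 1)
    by (pose proof (sin2_cos2 phi); unfold Rsqr in *; lra).
  set (s := sin phi) in *. set (c := cos phi) in *.
  set (x1 := x - M * (c / s) * y - N * c). set (y1 := y / s).
  assert (Ex : x = x1 + M*c*y1 + N*c) by (unfold x1, y1; field; lra).
  assert (Ey : y = s*y1) by (unfold y1; field; lra).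
  unfold kepler_curve, lemma6_map_rel, rad; simpl.
  split.
  - intros [[a b] [H [Ha Hb]]]; simpl in *.
    fold x1 in Ha. fold y1 in Hb. subst a b.
    rewrite Ex, Ey in *.
    replace (M * s * (s*y1)) with (M * s * (s * y1)) by ring.
    rewrite <- (key c s x1 y1 M N Hs Hcs) .
    rewrite <- Ex, <- Ey in *. exact H.
  - intro H. exists (x1, y1); simpl; split; [|split; reflexivity].
    rewrite (key c s x1 y1 M N Hs Hcs).
    rewrite <- Ex, <- Ey. exact H.
Qed.
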